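(* Let $\Gamma\subset\mathbb{R}$ satisfy property (C). Then for every $0<\epsilon<1$ there exist $N\in\mathbb{N}$ and $\eta_1,\dots,\eta_N\in\Gamma$ such that the exponential polynomial $P(t)=\frac{1}{N}\sum_{j=1}^N e^{i\eta_j t}$ satisfies $|P(t)|\leq\epsilon$ for all $t$ with $\epsilon<|t|<1/\epsilon$.
   Context: Property (C) of a set $\Gamma$: for every $m\in\mathbb{N}$ there are rationally independent numbers $q_1,\dots,q_m$ such that for every $N\in\mathbb{N}$ there exist $a_1,\dots,a_m$ with $\bigcup_{j=1}^m\{a_j+q_j,a_j+2q_j,\dots,a_j+Nq_j\}\subset\Gamma$. *)

(* Defs.v *)
From Stdlib Require Import Reals QArith Qreals.
Open Scope R_scope.

Fixpoint rsum (n : nat) (f : nat -> R) : R :=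
  match n with
  | O => 0
  | S k => rsum k f + f k
  end.

Definition rat_indep (m : nat) (q : nat -> R) : Prop :=
  forall c : nat -> Q,
    rsum m (fun j => Q2R (c j) * q j) = 0 ->
    forall j, (j < m)%nat -> Q2R (c j) = 0.

Definition propC (Gamma : R -> Prop) : Prop :=
  forall m : nat, exists q : nat -> R,
    rat_indep m q /\
    forall N : nat, exists a : nat -> R,
      forall j k : nat, (j < m)%nat -> (1 <= k <= N)%nat ->
        Gamma (a j + INR k * q j).

(* |P(t)| for P(t) = (1/N) sum_{j<N} e^{i eta_j t}, written via
   |z| = sqrt (Re z ^2 + Im z ^2) with e^{i x} = cos x + i sin x. *)
Definition expoly_abs (N : nat) (eta : nat -> R) (t : R) : R :=
  / INR N * sqrt ((rsum N (fun j => cos (eta j * t))) ^ 2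
                + (rsum N (fun j => sin (eta j * t))) ^ 2).

(* Main.v *)
Require Import Defs.
From Stdlib Require Import Reals QArith Qreals.
From Stdlib Require Import Lra Lia Classical.
From Coquelicot Require Import Coquelicot.
Open Scope R_scope.

Definition ce (x : R) : C := (cos x, sin x).

Fixpoint csum (n : nat) (f : nat -> C) : C :=
  match n with O => RtoC 0 | S k => Cplus (csum k f) (f k) end.

Lemma csum_fst n f : fst (csum n f) = rsum n (fun i => fst (f i)).
Proof. induction n; simpl; [reflexivity| rewrite IHn; reflexivity]. Qed.
Lemma csum_snd n f : snd (csum n f) = rsum n (fun i => snd (f i)).
Proof. induction n; simpl; [reflexivity| rewrite IHn; reflexivity]. Qed.

Lemma expoly_cmod N eta t :
  expoly_abs N eta t = / INR N * Cmod (csum N (fun i => ce (eta i * t))).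
Proof. unfold expoly_abs, Cmod. rewrite csum_fst, csum_snd. reflexivity. Qed.

Lemma csum_add a b f : csum (a + b) f = Cplus (csum a f) (csum b (fun k => f (a + k)%nat)).
Proof.
  induction b.
  - rewrite Nat.add_0_r. simpl. ring.
  - rewrite Nat.add_succ_r. simpl. rewrite IHb. ring.
Qed.

Lemma csum_ext n f g : (forall i, (i < n)%nat -> f i = g i) -> csum n f = csum n g.
Proof.
  induction n; intros H; simpl; [reflexivity|].
  rewrite IHn by (intros; apply H; lia). rewrite H by lia. reflexivity.
Qed.

Lemma csum_mult m N' f :
  csum m (fun j => csum N' (fun k => f (j * N' + k)%nat)) = csum (m * N') f.
Proof.
  induction m; simpl; [reflexivity|].
  rewrite Nat.add_comm, csum_add, IHm. reflexivity.
Qed.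

Lemma Cmod_csum_le n f : Cmod (csum n f) <= rsum n (fun i => Cmod (f i)).
Proof.
  induction n; simpl.
  - rewrite Cmod_0. lra.
  - eapply Rle_trans; [apply Cmod_triangle|]. lra.
Qed.

Lemma ce_add x y : Cmult (ce x) (ce y) = ce (x + y).
Proof.
  unfold ce, Cmult; simpl. rewrite cos_plus, sin_plus.
  apply injective_projections; simpl; ring.
Qed.

Lemma Cmod_ce x : Cmod (ce x) = 1.
Proof.
  unfold Cmod, ce; simpl.
  pose proof (sin2_cos2 x). unfold Rsqr in H.
  replace (cos x * (cos x * 1) + sin x * (sin x * 1)) with 1 by nra. apply sqrt_1.
Qed.

Lemma rsum_const n : rsum n (fun _ => 1) = INR n.
Proof. induction n; simpl rsum; [reflexivity|]. rewrite IHn, S_INR. reflexivity. Qed.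

Lemma rsum_le n f g : (forall i, (i < n)%nat -> f i <= g i) -> rsum n f <= rsum n g.
Proof.
  induction n; intros H; simpl; [lra|].
  pose proof (H n ltac:(lia)). pose proof (IHn ltac:(intros; apply H; lia)). lra.
Qed.

Lemma block_tel n x th :
  Cmult (csum n (fun k => ce (x + INR (S k) * th))) (Cminus (ce th) 1)
  = Cminus (ce (x + INR (S n) * th)) (ce (x + th)).
Proof.
  induction n.
  - simpl. replace (x + 1 * th) with (x + th) by ring. ring.
  - cbn [csum].
    replace (Cmult (Cplus (csum n (fun k => ce (x + INR (S k) * th))) (ce (x + INR (S n) * th)))
       (Cminus (ce th) 1)) with
      (Cplus (Cmult (csum n (fun k => ce (x + INR (S k) * th))) (Cminus (ce th) 1))
         (Cminus (Cmult (ce (x + INR (S n) * th)) (ce th)) (ce (x + INR (S n) * th)))) by ring.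
    rewrite IHn, ce_add.
    replace (x + INR (S n) * th + th) with (x + INR (S (S n)) * th)
      by (rewrite (S_INR (S n)); ring).
    ring.
Qed.

Lemma block_bound n x th :
  Cmod (csum n (fun k => ce (x + INR (S k) * th))) * Cmod (Cminus (ce th) 1) <= 2.
Proof.
  rewrite <- Cmod_mult, block_tel. unfold Cminus.
  eapply Rle_trans; [apply Cmod_triangle|]. rewrite Cmod_opp, !Cmod_ce. lra.
Qed.

Lemma Cmod_ce_m1 th : Cmod (Cminus (ce th) 1) = sqrt (2 * (1 - cos th)).
Proof.
  unfold Cmod, ce, Cminus, Cplus, Copp; simpl. f_equal.
  pose proof (sin2_cos2 th). unfold Rsqr in H. nra.
Qed.

Lemma rsum_single n j v : rsum n (fun i => if Nat.eqb i j then v else 0)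
  = if Nat.ltb j n then v else 0.
Proof.
  induction n; simpl; [destruct (Nat.ltb_spec j 0); [lia|reflexivity]|].
  rewrite IHn.
  destruct (Nat.eqb_spec n j), (Nat.ltb_spec j n), (Nat.ltb_spec j (S n)); try lia; lra.
Qed.

Lemma rsum_plus n f g : rsum n (fun i => f i + g i) = rsum n f + rsum n g.
Proof. induction n; simpl; [lra|]. rewrite IHn. lra. Qed.

Lemma rsum_ext n f g : (forall i, (i < n)%nat -> f i = g i) -> rsum n f = rsum n g.
Proof.
  induction n; intros H; simpl; [reflexivity|].
  rewrite IHn by (intros; apply H; lia). rewrite H by lia. reflexivity.
Qed.

Lemma Q2R_inj z : Q2R (inject_Z z) = IZR z.
Proof. unfold Q2R; simpl. rewrite Rinv_1, Rmult_1_r. reflexivity. Qed.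

Lemma cos1_sin0 x : cos x = 1 -> sin x = 0.
Proof. intros H. pose proof (sin2_cos2 x). unfold Rsqr in H0. rewrite H in H0. nra. Qed.

Lemma pair_sep m q (Hind : rat_indep m q) a b (Ha : 0 < a) (Hab : a <= b) j l :
  (j < m)%nat -> (l < m)%nat -> j <> l ->
  exists d, 0 < d /\ forall t, a <= t <= b -> d <= (1 - cos (q j * t)) + (1 - cos (q l * t)).
Proof.
  intros Hj Hl Hjl.
  set (g := fun t => (1 - cos (q j * t)) + (1 - cos (q l * t))).
  destruct (continuity_ab_min g a b Hab) as [mx [Hmin Hmx]].
  { intros c _. unfold g. reg. }
  exists (g mx). split; [|exact Hmin].
  pose proof (COS_bound (q j * mx)) as B1. pose proof (COS_bound (q l * mx)) as B2.
  destruct (Rle_lt_or_eq_dec 0 (g mx)) as [Hp|H0]; [unfold g; lra|exact Hp|].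
  exfalso. unfold g in H0.
  assert (C1 : cos (q j * mx) = 1) by lra. assert (C2 : cos (q l * mx) = 1) by lra.
  destruct (sin_eq_0_0 _ (cos1_sin0 _ C1)) as [kj Hkj].
  destruct (sin_eq_0_0 _ (cos1_sin0 _ C2)) as [kl Hkl].
  assert (E : IZR kl * q j + IZR (- kj) * q l = 0).
  { rewrite opp_IZR. apply (Rmult_eq_reg_l mx); [|lra].
    transitivity (IZR kl * (q j * mx) - IZR kj * (q l * mx)); [ring|].
    rewrite Hkj, Hkl. ring. }
  set (c := fun i => if Nat.eqb i j then inject_Z kl else if Nat.eqb i l then inject_Z (- kj) else 0%Q).
  assert (Hc : rsum m (fun i => Q2R (c i) * q i) = 0).
  { rewrite (rsum_ext m _ (fun i => (if Nat.eqb i j then IZR kl * q j else 0)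
                                 + (if Nat.eqb i l then IZR (-kj) * q l else 0))).
    - rewrite rsum_plus, !rsum_single.
      destruct (Nat.ltb_spec j m), (Nat.ltb_spec l m); try lia. lra.
    - intros i _. unfold c.
      destruct (Nat.eqb_spec i j), (Nat.eqb_spec i l); subst; try lia;
        rewrite ?Q2R_inj, ?RMicromega.Q2R_0; ring. }
  pose proof (Hind c Hc j Hj) as Hcj. unfold c in Hcj.
  rewrite Nat.eqb_refl, Q2R_inj in Hcj.
  rewrite Hcj in Hkl. rewrite Rmult_0_l in Hkl.
  assert (ql0 : q l = 0).
  { apply (Rmult_eq_reg_r mx); [|lra]. lra. }
  set (c' := fun i => if Nat.eqb i l then 1%Q else 0%Q).
  assert (Hc' : rsum m (fun i => Q2R (c' i) * q i) = 0).
  { rewrite (rsum_ext m _ (fun i => if Nat.eqb i l then 0 else 0)).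
    - rewrite rsum_single. destruct (Nat.ltb l m); reflexivity.
    - intros i _. unfold c'. destruct (Nat.eqb_spec i l); subst;
        [rewrite ql0; ring | rewrite RMicromega.Q2R_0; ring]. }
  pose proof (Hind c' Hc' l Hl) as H1. unfold c' in H1. rewrite Nat.eqb_refl in H1.
  rewrite RMicromega.Q2R_1 in H1. lra.
Qed.

Lemma fin_min (P : nat -> R -> Prop) n :
  (forall i d d', P i d -> 0 < d' <= d -> P i d') ->
  (forall i, (i < n)%nat -> exists d, 0 < d /\ P i d) ->
  exists d, 0 < d /\ forall i, (i < n)%nat -> P i d.
Proof.
  intros Hmon; induction n; intros H.
  - exists 1. split; [lra|intros; lia].
  - destruct IHn as [d1 [Hd1 P1]]; [intros; apply H; lia|].
    destruct (H n ltac:(lia)) as [d2 [Hd2 P2]].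
    exists (Rmin d1 d2). split; [apply Rmin_pos; auto|].
    intros i Hi. destruct (Nat.eq_dec i n) as [->|Hne].
    + eapply Hmon; [exact P2|]. split; [apply Rmin_pos; auto|apply Rmin_r].
    + eapply Hmon; [apply P1; lia|]. split; [apply Rmin_pos; auto|apply Rmin_l].
Qed.

Lemma unif_sep m q (Hind : rat_indep m q) a b (Ha : 0 < a) (Hab : a <= b) :
  exists d, 0 < d /\ forall j l, (j < m)%nat -> (l < m)%nat -> j <> l ->
    forall t, a <= t <= b -> d <= (1 - cos (q j * t)) + (1 - cos (q l * t)).
Proof.
  destruct (fin_min (fun j d => forall l, (l < m)%nat -> j <> l ->
    forall t, a <= t <= b -> d <= (1 - cos (q j * t)) + (1 - cos (q l * t))) m)
    as [d [Hd P]].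
  - intros i d d' H [H1 H2] l Hl Hne t Ht. specialize (H l Hl Hne t Ht). lra.
  - intros j Hj.
    destruct (fin_min (fun l d => j <> l ->
      forall t, a <= t <= b -> d <= (1 - cos (q j * t)) + (1 - cos (q l * t))) m)
      as [d [Hd P]].
    + intros i d d' H [H1 H2] Hne t Ht. specialize (H Hne t Ht). lra.
    + intros l Hl. destruct (Nat.eq_dec j l) as [->|Hne].
      * exists 1. split; [lra|]. intros; congruence.
      * destruct (pair_sep m q Hind a b Ha Hab j l Hj Hl Hne) as [d [Hd P]].
        exists d. split; auto.
    + exists d. split; [exact Hd|]. intros l Hl Hne. apply P; auto.
  - exists d. split; [exact Hd|]. intros j l Hj Hl Hne. apply P; auto.
Qed.

Lemma rsum_one_big n f c M js : 0 <= c ->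
  (forall j, (j < n)%nat -> j <> js -> f j <= c) -> (f js <= M) ->
  rsum n f <= INR n * c + (if Nat.ltb js n then M else 0).
Proof.
  intros Hc0 H1 H2. induction n; simpl rsum.
  - simpl. lra.
  - rewrite S_INR. specialize (IHn ltac:(intros; apply H1; lia)).
    destruct (Nat.eq_dec n js) as [->|Hne].
    + destruct (Nat.ltb_spec js js), (Nat.ltb_spec js (S js)); try lia. lra.
    + pose proof (H1 n ltac:(lia) Hne).
      destruct (Nat.ltb_spec js n), (Nat.ltb_spec js (S n)); try lia; lra.
Qed.

Lemma cos_abs q t : cos (q * Rabs t) = cos (q * t).
Proof.
  destruct (Rcase_abs t).
  - rewrite Rabs_left by lra. replace (q * - t) with (- (q * t)) by ring. apply cos_neg.
  - rewrite Rabs_right by lra. reflexivity.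
Qed.

Theorem lemma5 (Gamma : R -> Prop) (HC : propC Gamma) (eps : R)
  (Heps0 : 0 < eps) (Heps1 : eps < 1) :
  exists (N : nat) (eta : nat -> R),
    (1 <= N)%nat /\
    (forall j, (j < N)%nat -> Gamma (eta j)) /\
    (forall t : R, eps < Rabs t < / eps -> expoly_abs N eta t <= eps).
Proof.
  destruct (archimed_cor1 (eps / 2) ltac:(lra)) as [m [Hm Hm0]].
  destruct (HC m) as [q [Hind Hprog]].
  assert (Hie : eps <= / eps).
  { assert (eps * / eps = 1) by (field; lra).
    assert (0 < / eps) by (apply Rinv_0_lt_compat; lra). nra. }
  destruct (unif_sep m q Hind eps (/ eps) Heps0 Hie) as [d [Hd Hsep]].
  assert (Hsd : 0 < sqrt d) by (apply sqrt_lt_R0; lra).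
  set (c := 2 / sqrt d).
  assert (Hc : 0 < c) by (unfold c; apply Rdiv_lt_0_compat; lra).
  destruct (archimed_cor1 (eps / (2 * c))) as [N' [HN' HN'0]].
  { apply Rdiv_lt_0_compat; lra. }
  destruct (Hprog N') as [a Ha].
  exists (m * N')%nat,
    (fun i => a (i / N')%nat + INR (S (i mod N')) * q (i / N')%nat).
  split; [nia|]. split.
  { intros i Hi. apply Ha.
    - apply Nat.Div0.div_lt_upper_bound. lia.
    - pose proof (Nat.mod_upper_bound i N' ltac:(lia)). lia. }
  intros t Ht.
  rewrite expoly_cmod, <- csum_mult.
  rewrite (csum_ext m _ (fun j => csum N' (fun k => ce (a j * t + INR (S k) * (q j * t))))).
  2:{ intros j Hj. apply csum_ext. intros k Hk.
      assert (E1 : ((j * N' + k) / N')%nat = j).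
      { rewrite Nat.div_add_l by lia. rewrite Nat.div_small by lia. lia. }
      assert (E2 : ((j * N' + k) mod N')%nat = k).
      { rewrite Nat.add_comm, Nat.Div0.mod_add. apply Nat.mod_small. lia. }
      rewrite E1, E2. f_equal. ring. }
  assert (Hjs : exists js, forall j, (j < m)%nat -> j <> js -> d / 2 <= 1 - cos (q j * t)).
  { assert (Hrng : eps <= Rabs t <= / eps) by lra.
    destruct (classic (exists j, (j < m)%nat /\ 1 - cos (q j * t) < d / 2)) as [[j [Hj Hb]]|Hn].
    - exists j. intros l Hl Hne.
      pose proof (Hsep j l Hj Hl (not_eq_sym Hne) (Rabs t) Hrng). rewrite !cos_abs in H. lra.
    - exists m. intros j Hj _. apply Rnot_lt_le. intros Hb. apply Hn. exists j. auto. }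
  destruct Hjs as [js Hjs].
  set (B := fun j => csum N' (fun k => ce (a j * t + INR (S k) * (q j * t)))).
  assert (HB : rsum m (fun j => Cmod (B j)) <= INR m * c + INR N').
  { eapply Rle_trans; [apply (rsum_one_big m _ c (INR N') js)|].
    - lra.
    - intros j Hj Hne. specialize (Hjs j Hj Hne).
      pose proof (block_bound N' (a j * t) (q j * t)) as Hb.
      rewrite Cmod_ce_m1 in Hb. fold (B j) in Hb.
      assert (sqrt d <= sqrt (2 * (1 - cos (q j * t)))) by (apply sqrt_le_1_alt; lra).
      pose proof (Cmod_ge_0 (B j)).
      apply (Rmult_le_reg_r (sqrt d)); [lra|]. unfold c.
      replace (2 / sqrt d * sqrt d) with 2 by (field; lra). nra.
    - unfold B. eapply Rle_trans; [apply Cmod_csum_le|].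
      rewrite <- rsum_const. apply rsum_le. intros. rewrite Cmod_ce. lra.
    - destruct (Nat.ltb js m); [lra|]. pose proof (pos_INR N'). lra. }
  fold B.
  pose proof (Cmod_csum_le m B) as HC1.
  assert (HM : 0 < INR m) by (apply lt_0_INR; lia).
  assert (HK : 0 < INR N') by (apply lt_0_INR; lia).
  rewrite mult_INR.
  apply Rle_trans with (/ (INR m * INR N') * (INR m * c + INR N')).
  { apply Rmult_le_compat_l; [left; apply Rinv_0_lt_compat; nra|lra]. }
  replace (/ (INR m * INR N') * (INR m * c + INR N')) with (c * / INR N' + / INR m)
    by (field; lra).
  assert (c * / INR N' < c * (eps / (2 * c))) by (apply Rmult_lt_compat_l; lra).
  replace (c * (eps / (2 * c))) with (eps / 2) in H by (field; lra).
  lra.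
Qed.
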